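(* Let $n\ge 2$. Let $Br^n$ be the classical $n$-strand (Artin) braid group with generators $\sigma_1,\dots,\sigma_{n-1}$, and let $Br_2^n$ be the $n$-strand $\mathbb{Z}_2$-braid group (defined in the context). Consider the map $Br^n\to Br_2^n$ sending each braid word in $\sigma_i^{\pm1}$ to the word obtained by replacing each $\sigma_i^{\pm1}$ by $\sigma_{i,0}^{\pm1}$ (i.e. a classical braid is regarded as a $\mathbb{Z}_2$-braid all of whose crossings are even). If two classical braids $\gamma_1,\gamma_2\in Br^n$ have equal images in $Br_2^n$, then $\gamma_1=\gamma_2$ in $Br^n$.
   Context: The classical braid group $Br^n$ has generators $\sigma_1,\dots,\sigma_{n-1}$ and relations $\sigma_i\sigma_j=\sigma_j\sigma_i$ for $|i-j|\ge 2$ and $\sigma_i\sigma_{i+1}\sigma_i=\sigma_{i+1}\sigma_i\sigma_{i+1}$ for $1\le i\le n-2$. The $n$-strand $\mathbb{Z}_2$-braid group $Br_2^n$ is the group with generators $\sigma_{i,0},\sigma_{i,1}$, $i=1,\dots,n-1$, and relations $\sigma_{i,\varepsilon}\sigma_{j,\eta}=\sigma_{j,\eta}\sigma_{i,\varepsilon}$ for all $|i-j|\ge 2$ and all $\varepsilon,\eta\in\{0,1\}$, and $\sigma_{i,\varepsilon}\sigma_{i+1,\eta}\sigma_{i,\xi}=\sigma_{i+1,\xi}\sigma_{i,\eta}\sigma_{i+1,\varepsilon}$ for $1\le i\le n-2$ and all $\varepsilon,\eta,\xi\in\{0,1\}$ with $\varepsilon+\eta+\xi\equiv 0\pmod 2$.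 Generators $\sigma_{i,0}$ are called even, $\sigma_{i,1}$ odd. *)

(* Defs.v *)
(* Finitely presented groups are encoded via words and the
   congruence generated by free cancellation and the defining relations. *)
From mathcomp Require Import all_boot.
Set Implicit Arguments. Unset Strict Implicit. Unset Printing Implicit Defensive.

(* A letter is (g, b): b = false means g, b = true means g^-1. *)
Definition word (G : Type) := seq (G * bool).

Inductive weq (G : Type) (R : word G -> word G -> Prop) : word G -> word G -> Prop :=
| weq_refl w : weq R w w
| weq_sym u v : weq R u v -> weq R v u
| weq_trans u v w : weq R u v -> weq R v w -> weq R u w
| weq_ctx a b u v : weq R u v -> weq R (a ++ u ++ b) (a ++ v ++ b)
| weq_inv g e : weq R [:: (g, e); (g, ~~ e)] [::]
| weq_rel u v : R u v -> weq R u v.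

(* Classical braid group Br^n: generator i : 'I_(n.-1) stands for sigma_(i+1). *)
Definition braid_rel (n : nat) (u v : word 'I_(n.-1)) : Prop :=
  (exists i j : 'I_(n.-1), ((i + 2 <= j) || (j + 2 <= i))%N /\
     u = [:: (i, false); (j, false)] /\ v = [:: (j, false); (i, false)])
  \/
  (exists i j : 'I_(n.-1), val j = (val i).+1 /\
     u = [:: (i, false); (j, false); (i, false)] /\
     v = [:: (j, false); (i, false); (j, false)]).

(* Z2-braid group Br_2^n: generator (i, e) stands for sigma_(i+1, e)
   (e = false: even, e = true: odd). *)
Definition z2braid_rel (n : nat) (u v : word ('I_(n.-1) * bool)) : Prop :=
  (exists (i j : 'I_(n.-1)) (e h : bool), ((i + 2 <= j) || (j + 2 <= i))%N /\
     u = [:: ((i, e), false); ((j, h), false)] /\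
     v = [:: ((j, h), false); ((i, e), false)])
  \/
  (exists (i j : 'I_(n.-1)) (e h x : bool), val j = (val i).+1 /\
     (e (+) h (+) x) = false /\
     u = [:: ((i, e), false); ((j, h), false); ((i, x), false)] /\
     v = [:: ((j, x), false); ((i, h), false); ((j, e), false)]).

Definition BrEq (n : nat) := weq (@braid_rel n).
Definition Br2Eq (n : nat) := weq (@z2braid_rel n).

Definition even_embed (n : nat) (w : word 'I_(n.-1)) : word ('I_(n.-1) * bool) :=
  map (fun l => ((l.1, false), l.2)) w.

(* Main.v *)
Require Import Defs.
From mathcomp Require Import all_boot.

Definition forget (n : nat) (l : ('I_(n.-1) * bool) * bool) : 'I_(n.-1) * bool :=
  (l.1.1, l.2).

Lemma weq_map (n : nat) (u v : word ('I_(n.-1) * bool)) :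
  Br2Eq u v -> BrEq (map (@forget n) u) (map (@forget n) v).
Proof.
elim=> {u v}.
- move=> w; exact: weq_refl.
- move=> u v _ IH; exact: weq_sym.
- move=> u v w _ IH1 _ IH2; exact: weq_trans IH1 IH2.
- move=> a b u v _ IH; rewrite !map_cat; exact: weq_ctx.
- move=> g e /=; exact: weq_inv.
- move=> u v [[i [j [e [h [Hij [-> ->]]]]]]|[i [j [e [h [x [Hij [_ [-> ->]]]]]]]]] /=;
    apply: weq_rel.
  + left; exists i, j; done.
  + right; exists i, j; done.
Qed.

Theorem theorem1 (n : nat) (hn : (2 <= n)%N) (w1 w2 : word 'I_(n.-1)) :
  Br2Eq (even_embed w1) (even_embed w2) -> BrEq w1 w2.
Proof.
move=> /weq_map.
have E : forall w : word 'I_(n.-1), map (@forget n) (even_embed w) = w.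
  by move=> w; rewrite /even_embed -map_comp; elim: w => //= [[a b] w ->].
by rewrite !E.
Qed.
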